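(* Consider the reachability strategy-improvement algorithm described in the context, run on a concurrent game structure $G$ with target $T$ (with all states of $T\cup W_2$ absorbing), producing player-1 selectors $\gamma_0,\gamma_1,\gamma_2,\dots$ and valuations $v_i=\mathrm{val}_1^{\overline{\gamma}_i}(\mathrm{Reach}(T))$ (if the algorithm stops, the sequences are understood as constant from that point on). Then: (1) for all $i\ge 0$, $\overline{\gamma}_i\preceq\overline{\gamma}_{i+1}$; moreover, if $\overline{\gamma}_i=\overline{\gamma}_{i+1}$ then $\overline{\gamma}_i$ is an optimal strategy for $\mathrm{Reach}(T)$, i.e. $\mathrm{val}_1^{\overline{\gamma}_i}(\mathrm{Reach}(T))=\mathrm{val}_1(\mathrm{Reach}(T))$; (2) $\lim_{i\to\infty}v_i=\mathrm{val}_1(\mathrm{Reach}(T))$ pointwise.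
   Context: A concurrent game structure $G=(S,M,\Gamma_1,\Gamma_2,\delta)$: finite states $S$, finite moves $M$, nonempty move sets $\Gamma_1(s),\Gamma_2(s)\subseteq M$, and $\delta(s,a_1,a_2)\in\mathrm{Distr}(S)$ for $a_1\in\Gamma_1(s),a_2\in\Gamma_2(s)$ (moves chosen simultaneously and independently). A state $s$ is absorbing if $\delta(s,a_1,a_2)(s)=1$ for all moves. A selector for player $i$ assigns to each state $s$ a distribution $\xi(s)$ on $\Gamma_i(s)$; $\overline{\xi}$ is the memoryless strategy playing $\xi$ forever. Strategies are maps from finite histories to distributions on available moves; $\Pr_s^{\pi_1,\pi_2}$ is the induced measure on plays from $s$. $\mathrm{Reach}(T)$ is the set of plays visiting $T$. $\mathrm{val}_1^{\pi_1}(\mathrm{Reach}(T))(s)=\inf_{\pi_2}\Pr_s^{\pi_1,\pi_2}(\mathrm{Reach}(T))$ and $\mathrm{val}_1(\mathrm{Reach}(T))=\sup_{\pi_1}\mathrm{val}_1^{\pi_1}(\mathrm{Reach}(T))$; $\pi_1$ is optimal if $\mathrm{val}_1^{\pi_1}=\mathrm{val}_1$ at all states. A valuation is a map $v:S\to[0,1]$, compared pointwise. For selectors $\xi_1,\xi_2$: $\mathrm{Pre}_{\xi_1,\xi_2}(v)(s)=\sum_{a,b}\sum_{t}v(t)\,\delta(s,a,b)(t)\,\xi_1(s)(a)\,\xi_2(s)(b)$, $\mathrm{Pre}_{1:\xi_1}(v)(s)=\inf_{\xi_2}\mathrm{Pre}_{\xi_1,\xi_2}(v)(s)$, $\mathrm{Pre}_1(v)(s)=\sup_{\xi_1}\mathrm{Pre}_{1:\xi_1}(v)(s)$.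 $W_2=\{s:\mathrm{val}_1(\mathrm{Reach}(T))(s)=0\}$; standing assumption: all states in $T\cup W_2$ are absorbing. $\xi^{\mathrm{unif}}$ is the player-1 selector choosing all moves of $\Gamma_1(s)$ uniformly at random at each state. Preorder on player-1 strategies: $\pi_1\prec\pi_1'$ iff $\mathrm{val}_1^{\pi_1}(\mathrm{Reach}(T))\le\mathrm{val}_1^{\pi_1'}(\mathrm{Reach}(T))$ pointwise with strict inequality at some state; $\pi_1\preceq\pi_1'$ iff $\pi_1\prec\pi_1'$ or $\pi_1=\pi_1'$. The algorithm: $\gamma_0=\xi^{\mathrm{unif}}$, $v_0=\mathrm{val}_1^{\overline{\gamma}_0}(\mathrm{Reach}(T))$. At iteration $i$: let $I=\{s\in S\setminus(T\cup W_2):\mathrm{Pre}_1(v_i)(s)>v_i(s)\}$; let $\xi_1$ be a player-1 selector with $\mathrm{Pre}_{1:\xi_1}(v_i)(s)=\mathrm{Pre}_1(v_i)(s)$ for all $s\in I$; set $\gamma_{i+1}(s)=\gamma_i(s)$ for $s\notin I$ and $\gamma_{i+1}(s)=\xi_1(s)$ for $s\in I$; compute $v_{i+1}=\mathrm{val}_1^{\overline{\gamma}_{i+1}}(\mathrm{Reach}(T))$. The algorithm stops and returns $\overline{\gamma}_i$ when $I=\emptyset$. *)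

(* Defs.v *)
From HB Require Import structures.
From mathcomp Require Import all_boot all_order all_algebra.
From mathcomp Require Import all_classical all_reals all_analysis.

Set Implicit Arguments.
Unset Strict Implicit.
Unset Printing Implicit Defensive.

Import Order.TTheory GRing.Theory Num.Theory.
Local Open Scope ring_scope.
Local Open Scope classical_set_scope.

Section CGS.
Variables (R : realType) (S M : finType).

(* The transition
   function is total in the type, but it is only constrained (and only ever
   used with positive weight) on available moves. *)
Record cgs := CGS {
  mov1 : S -> {set M};
  mov2 : S -> {set M};
  trans : S -> M -> M -> {ffun S -> R} }.

Definition is_distr_on (A : {set M}) (d : {ffun M -> R}) : Prop :=
  (forall a, 0 <= d a) /\ (forall a, a \notin A -> d a = 0) /\ \sum_a d a = 1.

Definition cgs_wf (G : cgs) : Prop :=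
  (forall s, mov1 G s != finset.set0) /\ (forall s, mov2 G s != finset.set0) /\
  (forall s a b, a \in mov1 G s -> b \in mov2 G s ->
     (forall t, 0 <= trans G s a b t) /\ \sum_t trans G s a b t = 1).

Definition absorbing (G : cgs) (s : S) : Prop :=
  forall a b, a \in mov1 G s -> b \in mov2 G s -> trans G s a b s = 1.

(* A strategy maps a finite history (the previous states h followed by the
   current state s) to a distribution on moves. *)
Definition strategy := seq S -> S -> {ffun M -> R}.
Definition is_strategy1 (G : cgs) (pi : strategy) : Prop :=
  forall h s, is_distr_on (mov1 G s) (pi h s).
Definition is_strategy2 (G : cgs) (pi : strategy) : Prop :=
  forall h s, is_distr_on (mov2 G s) (pi h s).

Definition selector := S -> {ffun M -> R}.
Definition is_selector1 (G : cgs) (xi : selector) : Prop :=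
  forall s, is_distr_on (mov1 G s) (xi s).
Definition is_selector2 (G : cgs) (xi : selector) : Prop :=
  forall s, is_distr_on (mov2 G s) (xi s).

Definition memoryless (xi : selector) : strategy := fun _ s => xi s.

Definition unif_sel (G : cgs) : selector :=
  fun s => [ffun a => if a \in mov1 G s then (#|mov1 G s|%:R)^-1 else 0].

Section Reach.
Variables (G : cgs) (T : {set S}) (pi1 pi2 : strategy).

(* Probability, from history (h, s), that T is visited within n further
   steps (position 0 included). *)
Fixpoint reach_within (n : nat) (h : seq S) (s : S) : R :=
  if s \in T then 1 else
  match n with
  | 0 => 0
  | n'.+1 => \sum_a \sum_b (pi1 h s a * pi2 h s b *
               \sum_t trans G s a b t * reach_within n' (rcons h s) t)
  end.

(* Pr_s^{pi1,pi2}(Reach T): by continuity of the measure, the probability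
   of the increasing union of the events "T visited within n steps". *)
Definition reach_prob (s : S) : R :=
  sup (range (fun n => reach_within n [::] s)).
End Reach.

Definition val1_strat (G : cgs) (T : {set S}) (pi1 : strategy) (s : S) : R :=
  inf [set reach_prob G T pi1 pi2 s | pi2 in [set p | is_strategy2 G p]].

Definition value1 (G : cgs) (T : {set S}) (s : S) : R :=
  sup [set val1_strat G T pi1 s | pi1 in [set p | is_strategy1 G p]].

Definition pre_pair (G : cgs) (xi1 xi2 : selector) (v : S -> R) (s : S) : R :=
  \sum_a \sum_b \sum_t v t * trans G s a b t * xi1 s a * xi2 s b.

Definition pre1_sel (G : cgs) (xi1 : selector) (v : S -> R) (s : S) : R :=
  inf [set pre_pair G xi1 xi2 v s | xi2 in [set x | is_selector2 G x]].

Definition pre1 (G : cgs) (v : S -> R) (s : S) : R :=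
  sup [set pre1_sel G xi1 v s | xi1 in [set x | is_selector1 G x]].

Definition W2 (G : cgs) (T : {set S}) : set S := [set s | value1 G T s = 0].

Definition strat_lt (G : cgs) (T : {set S}) (pi pi' : strategy) : Prop :=
  (forall s, val1_strat G T pi s <= val1_strat G T pi' s) /\
  (exists s, val1_strat G T pi s < val1_strat G T pi' s).
Definition strat_le (G : cgs) (T : {set S}) (pi pi' : strategy) : Prop :=
  strat_lt G T pi pi' \/ pi = pi'.

Definition improve_set (G : cgs) (T : {set S}) (v : S -> R) (s : S) : Prop :=
  s \notin T /\ ~ W2 G T s /\ v s < pre1 G v s.

(* One iteration of the algorithm: gamma' is obtained from gamma.  When I is
   empty this forces gamma' = gamma (the run is constant after stopping). *)
Definition alg_step (G : cgs) (T : {set S}) (gamma gamma' : selector) : Prop :=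
  let v := val1_strat G T (memoryless gamma) in
  exists xi1 : selector, is_selector1 G xi1 /\
    (forall s, improve_set G T v s -> pre1_sel G xi1 v s = pre1 G v s) /\
    (forall s, improve_set G T v s -> gamma' s = xi1 s) /\
    (forall s, ~ improve_set G T v s -> gamma' s = gamma s).

End CGS.

(* Main.v *)
Require Import Defs.
From HB Require Import structures.
From mathcomp Require Import all_boot all_order all_algebra.
From mathcomp Require Import all_classical all_reals all_analysis.
From mathcomp Require Import ring lra.
Import Order.TTheory GRing.Theory Num.Theory.
Import numFieldNormedType.Exports.
Local Open Scope ring_scope.
Local Open Scope classical_set_scope.
Set Implicit Arguments. Unset Strict Implicit. Unset Printing Implicit Defensive.


Section Gen.
Variable R : realType.

Lemma sup_le_ub' (E : set R) b : (exists x, E x) -> (forall y, E y -> y <= b) -> sup E <= b.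
Proof. by move=> [x Ex] H; apply: ge_sup; [exists x|]. Qed.

Lemma le_sup' (E : set R) y b : E y -> (forall z, E z -> z <= b) -> y <= sup E.
Proof. by move=> Ey H; apply: ub_le_sup => //; exists b. Qed.

Lemma inf_ge' (E : set R) b : (exists x, E x) -> (forall y, E y -> b <= y) -> b <= inf E.
Proof. by move=> [x Ex] H; apply: lb_le_inf; [exists x|]. Qed.

Lemma inf_le' (E : set R) y b : E y -> (forall z, E z -> b <= z) -> inf E <= y.
Proof. by move=> Ey H; apply: ge_inf => //; exists b. Qed.

Lemma sup_adh' (E : set R) b eps : 0 < eps -> (exists x, E x) -> (forall y, E y -> y <= b) ->
  exists2 e, E e & sup E - eps < e.
Proof. by move=> e0 [x Ex] H; apply: sup_adherent => //; split; [exists x|exists b]. Qed.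

Lemma inf_adh' (E : set R) b eps : 0 < eps -> (exists x, E x) -> (forall y, E y -> b <= y) ->
  exists2 e, E e & e < inf E + eps.
Proof. by move=> e0 [x Ex] H; apply: inf_adherent => //; split; [exists x|exists b]. Qed.

Lemma le_eps (a b : R) : (forall eps, 0 < eps -> a <= b + eps) -> a <= b.
Proof.
move=> H; rewrite leNgt; apply/negP => ba.
have := H ((a - b) / 2); rewrite divr_gt0 ?subr_gt0 // => /(_ isT) h.
move: ba h; lra.
Qed.

End Gen.

Section Dist.
Variables (R : realType) (S : finType).
Definition pd (w : S -> R) := (forall t, 0 <= w t) /\ \sum_t w t = 1.

Lemma pd_mono w f g : pd w -> (forall t, f t <= g t) -> \sum_t w t * f t <= \sum_t w t * g t.
Proof. by move=> [w0 _] H; apply: ler_sum => t _; apply: ler_wpM2l. Qed.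

Lemma pd_addc w f c : pd w -> \sum_t w t * (f t + c) = \sum_t w t * f t + c.
Proof.
move=> [_ w1]; rewrite -[X in _ + X]mul1r -w1 mulr_suml -big_split /=.
by apply: eq_bigr => t _; rewrite mulrDr.
Qed.

Lemma pd_const w c : pd w -> \sum_t w t * c = c.
Proof. by move=> [_ w1]; rewrite -mulr_suml w1 mul1r. Qed.

Lemma pd_ub w f c : pd w -> (forall t, f t <= c) -> \sum_t w t * f t <= c.
Proof. by move=> pw H; rewrite -[leRHS](pd_const c pw); apply: pd_mono. Qed.

Lemma pd_lb w f c : pd w -> (forall t, c <= f t) -> c <= \sum_t w t * f t.
Proof. by move=> pw H; rewrite -{1}(pd_const c pw); apply: pd_mono. Qed.
End Dist.

Section Weights.
Variables (R : realType) (S M : finType) (G : cgs R S M).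
Hypothesis wf : cgs_wf G.

Definition wt (x y : {ffun M -> R}) s t := \sum_a \sum_b x a * y b * trans G s a b t.

Lemma step_wt (x y : {ffun M -> R}) s (f : S -> R) :
  \sum_a \sum_b (x a * y b * \sum_t trans G s a b t * f t) = \sum_t wt x y s t * f t.
Proof.
rewrite /wt.
under [RHS]eq_bigr => t _ do rewrite mulr_suml; rewrite [RHS]exchange_big /=.
apply: eq_bigr => a _.
under [RHS]eq_bigr => t _ do rewrite mulr_suml; rewrite [RHS]exchange_big /=.
apply: eq_bigr => b _; rewrite mulr_sumr; apply: eq_bigr => t _; by rewrite mulrA.
Qed.

Lemma pre_wt (xi1 xi2 : selector R S M) v s :
  pre_pair G xi1 xi2 v s = \sum_t wt (xi1 s) (xi2 s) s t * v t.
Proof.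
rewrite -step_wt /pre_pair; apply: eq_bigr => a _; apply: eq_bigr => b _.
rewrite mulr_sumr; apply: eq_bigr => t _.
ring.
Qed.

Lemma wt_term_ge0 (x y : {ffun M -> R}) s a b t : is_distr_on (mov1 G s) x -> is_distr_on (mov2 G s) y ->
  0 <= x a * y b * trans G s a b t.
Proof.
move=> [x0 [xo _]] [y0 [yo _]].
case: (boolP (a \in mov1 G s)) => ha; last by rewrite xo // !mul0r.
case: (boolP (b \in mov2 G s)) => hb; last by rewrite yo // mulr0 mul0r.
have [tr0 _] := (proj2 (proj2 wf)) s a b ha hb.
by rewrite !mulr_ge0.
Qed.

Lemma wt_pd (x y : {ffun M -> R}) s : is_distr_on (mov1 G s) x -> is_distr_on (mov2 G s) y ->
  pd (wt x y s).
Proof.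
move=> hx hy; split => [t|].
  by apply: sumr_ge0 => a _; apply: sumr_ge0 => b _; apply: wt_term_ge0.
have [x0 [xo x1]] := hx; have [y0 [yo y1]] := hy.
rewrite /wt exchange_big /=.
transitivity (\sum_a \sum_b x a * y b).
  apply: eq_bigr => a _; rewrite exchange_big /=; apply: eq_bigr => b _.
  rewrite -mulr_sumr.
  case: (boolP (a \in mov1 G s)) => ha; last by rewrite xo // !mul0r.
  case: (boolP (b \in mov2 G s)) => hb; last by rewrite yo // mulr0 mul0r.
  by have [_ ->] := (proj2 (proj2 wf)) s a b ha hb; rewrite mulr1.
by rewrite -(mul1r 1) -{1}x1 -y1 mulr_suml; apply: eq_bigr => a _; rewrite mulr_sumr.
Qed.

Lemma wt_absorb (x y : {ffun M -> R}) s (f : S -> R) : is_distr_on (mov1 G s) x -> is_distr_on (mov2 G s) y ->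
  absorbing G s -> \sum_t wt x y s t * f t = f s.
Proof.
move=> hx hy ab.
have [w0 w1] := wt_pd hx hy.
have ws : wt x y s s = 1.
  have [x0 [xo x1]] := hx; have [y0 [yo y1]] := hy.
  rewrite /wt -(mul1r 1) -{1}x1 -y1 mulr_suml; apply: eq_bigr => a _; rewrite mulr_sumr.
  apply: eq_bigr => b _.
  case: (boolP (a \in mov1 G s)) => ha; last by rewrite xo // !mul0r.
  case: (boolP (b \in mov2 G s)) => hb; last by rewrite yo // mulr0 mul0r.
  by rewrite ab // mulr1.
have wo : forall t, t != s -> wt x y s t = 0.
  have h : \sum_(t | t != s) wt x y s t = 0.
    by move: w1; rewrite (bigD1 s) //= ws => /(congr1 (fun z => z - 1)); rewrite addrC addrK subrr.
  by move=> t ts; apply: (psumr_eq0P _ h) => // i _; apply: w0.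
rewrite (bigD1 s) //= ws mul1r big1 ?addr0 // => t ts; by rewrite wo // mul0r.
Qed.

End Weights.

Lemma unif_distr (R : realType) (M : finType) (A : {set M}) : A != finset.set0 ->
  is_distr_on A [ffun a => if a \in A then (#|A|%:R : R)^-1 else 0].
Proof.
move=> hA; have cA : (0 < #|A|)%N by rewrite card_gt0.
split; [|split].
- by move=> a; rewrite ffunE; case: ifP => // _; rewrite invr_ge0 ler0n.
- by move=> a /negbTE ha; rewrite ffunE ha.
- rewrite (bigID (fun a => a \in A)) /= [X in _ + X]big1 ?addr0; last first.
    by move=> a /negbTE ha; rewrite ffunE ha.
  under eq_bigr => a ha do rewrite ffunE ha.
  by rewrite sumr_const -[X in X = 1]mulr_natr mulVf // pnatr_eq0 -lt0n.
Qed.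

Section Reach3.
Variables (R : realType) (S M : finType) (G : cgs R S M) (T : {set S}).
Hypothesis wf : cgs_wf G.

Definition sh (x : S) (pi : strategy R S M) : strategy R S M := fun h s => pi (x :: h) s.

Lemma rw_T pi1 pi2 n h s : s \in T -> reach_within G T pi1 pi2 n h s = 1.
Proof. by move=> hs; case: n => /=; rewrite hs. Qed.

Lemma rw_0 pi1 pi2 h s : s \notin T -> reach_within G T pi1 pi2 0 h s = 0.
Proof. by move=> /negbTE hs /=; rewrite hs. Qed.

Lemma rw_step pi1 pi2 n h s : s \notin T ->
  reach_within G T pi1 pi2 n.+1 h s =
  \sum_t wt G (pi1 h s) (pi2 h s) s t * reach_within G T pi1 pi2 n (rcons h s) t.
Proof. by move=> /negbTE hs /=; rewrite hs step_wt. Qed.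

Lemma rw_shift pi1 pi2 n x h t :
  reach_within G T pi1 pi2 n (x :: h) t = reach_within G T (sh x pi1) (sh x pi2) n h t.
Proof.
elim: n h t => [|n IH] h t /=; first by [].
case: (t \in T) => //; apply: eq_bigr => a _; apply: eq_bigr => b _.
by congr (_ * _); apply: eq_bigr => u _; rewrite IH.
Qed.

Variables (pi1 pi2 : strategy R S M).
Hypotheses (h1 : is_strategy1 G pi1) (h2 : is_strategy2 G pi2).

Lemma rw_bnd n h s : 0 <= reach_within G T pi1 pi2 n h s <= 1.
Proof.
elim: n h s => [|n IH] h s.
  by case: (boolP (s \in T)) => hs; [rewrite rw_T // ler01 lexx|rewrite rw_0 // lexx ler01].
case: (boolP (s \in T)) => hs; first by rewrite rw_T // ler01 lexx.
rewrite rw_step //; apply/andP; split.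
  by apply: pd_lb (wt_pd wf (h1 h s) (h2 h s)) _ => t; case/andP: (IH (rcons h s) t).
by apply: pd_ub (wt_pd wf (h1 h s) (h2 h s)) _ => t; case/andP: (IH (rcons h s) t).
Qed.

Lemma rw_mono n h s : reach_within G T pi1 pi2 n h s <= reach_within G T pi1 pi2 n.+1 h s.
Proof.
elim: n h s => [|n IH] h s.
  case: (boolP (s \in T)) => hs; first by rewrite !rw_T.
  by rewrite rw_0 //; case/andP: (rw_bnd 1 h s).
case: (boolP (s \in T)) => hs; first by rewrite !rw_T.
rewrite (rw_step _ _ n.+1) // rw_step //.
by apply: pd_mono (wt_pd wf (h1 h s) (h2 h s)) _ => t; apply: IH.
Qed.

Lemma rw_mono_le n m h s : (n <= m)%N ->
  reach_within G T pi1 pi2 n h s <= reach_within G T pi1 pi2 m h s.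
Proof.
elim: m => [|m IH]; first by rewrite leqn0 => /eqP ->.
rewrite leq_eqVlt => /orP [/eqP -> //|]; rewrite ltnS => /IH h'.
exact: le_trans h' (rw_mono _ _ _).
Qed.

Lemma rp_ge n s : reach_within G T pi1 pi2 n [::] s <= reach_prob G T pi1 pi2 s.
Proof.
apply: (@le_sup' _ _ _ 1); first by exists n.
by move=> z [m _ <-]; case/andP: (rw_bnd m [::] s).
Qed.

Lemma rp_ub s c : (forall n, reach_within G T pi1 pi2 n [::] s <= c) ->
  reach_prob G T pi1 pi2 s <= c.
Proof. by move=> H; apply: sup_le_ub'; [exists (reach_within G T pi1 pi2 0 [::] s); exists 0%N|move=> z [m _ <-]]. Qed.

Lemma rp_bnd s : 0 <= reach_prob G T pi1 pi2 s <= 1.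
Proof.
apply/andP; split; first by apply: le_trans (rp_ge 0 s); case/andP: (rw_bnd 0 [::] s).
by apply: rp_ub => n; case/andP: (rw_bnd n [::] s).
Qed.

Lemma rp_adh s eps : 0 < eps -> exists n,
  reach_prob G T pi1 pi2 s - eps < reach_within G T pi1 pi2 n [::] s.
Proof.
move=> e0; have [|||z [n _ <-] hz] := @sup_adh' _ (range (fun n => reach_within G T pi1 pi2 n [::] s)) 1 eps.
- exact: e0.
- by exists (reach_within G T pi1 pi2 0 [::] s); exists 0%N.
- by move=> z [m _ <-]; case/andP: (rw_bnd m [::] s).
by exists n.
Qed.

End Reach3.

Section Vals.
Variables (R : realType) (S M : finType) (G : cgs R S M) (T : {set S}).
Hypothesis wf : cgs_wf G.

Definition unif2 : selector R S M :=
  fun s => [ffun a => if a \in mov2 G s then (#|mov2 G s|%:R)^-1 else 0].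

Lemma unif2_sel : is_selector2 G unif2.
Proof. by move=> s; apply: unif_distr; case: wf => _ [] /(_ s). Qed.

Lemma unif1_sel : is_selector1 G (unif_sel G).
Proof. by move=> s; apply: unif_distr; case: wf => /(_ s). Qed.

Lemma mem_strat1 xi : is_selector1 G xi -> is_strategy1 G (memoryless xi).
Proof. by move=> h hh s; apply: h. Qed.

Lemma mem_strat2 xi : is_selector2 G xi -> is_strategy2 G (memoryless xi).
Proof. by move=> h hh s; apply: h. Qed.

Lemma strat1_sel pi h : is_strategy1 G pi -> is_selector1 G (pi h).
Proof. by move=> H s; apply: H. Qed.

Lemma strat2_sel pi h : is_strategy2 G pi -> is_selector2 G (pi h).
Proof. by move=> H s; apply: H. Qed.

Variable pi1 : strategy R S M.
Hypothesis h1 : is_strategy1 G pi1.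

Lemma v_le pi2 s : is_strategy2 G pi2 -> val1_strat G T pi1 s <= reach_prob G T pi1 pi2 s.
Proof.
move=> h2; apply: (@inf_le' _ _ _ 0); first by exists pi2.
by move=> z [p hp <-]; case/andP: (rp_bnd T wf h1 hp s).
Qed.

Lemma v_ge s c : (forall pi2, is_strategy2 G pi2 -> c <= reach_prob G T pi1 pi2 s) ->
  c <= val1_strat G T pi1 s.
Proof.
move=> H; apply: inf_ge'; last by move=> z [p hp <-]; apply: H.
by exists (reach_prob G T pi1 (memoryless unif2) s); exists (memoryless unif2) => //; apply: mem_strat2; apply: unif2_sel.
Qed.

Lemma v_bnd s : 0 <= val1_strat G T pi1 s <= 1.
Proof.
have h2 := mem_strat2 unif2_sel.
apply/andP; split.
  by apply: v_ge => p hp; case/andP: (rp_bnd T wf h1 hp s).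
by apply: le_trans (v_le s h2) _; case/andP: (rp_bnd T wf h1 h2 s).
Qed.

Lemma v_adh s eps : 0 < eps -> exists2 pi2, is_strategy2 G pi2 &
  reach_prob G T pi1 pi2 s < val1_strat G T pi1 s + eps.
Proof.
move=> e0; have [||z [p hp <-] hz] := @inf_adh' _ [set reach_prob G T pi1 pi2 s | pi2 in [set p | is_strategy2 G p]] 0 eps e0.
- by exists (reach_prob G T pi1 (memoryless unif2) s); exists (memoryless unif2) => //; apply: mem_strat2; apply: unif2_sel.
- by move=> z [p hp <-]; case/andP: (rp_bnd T wf h1 hp s).
by exists p.
Qed.

End Vals.

Section Value.
Variables (R : realType) (S M : finType) (G : cgs R S M) (T : {set S}).
Hypothesis wf : cgs_wf G.

Lemma val_le_value pi1 s : is_strategy1 G pi1 -> val1_strat G T pi1 s <= value1 G T s.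
Proof.
move=> h1; apply: (@le_sup' _ _ _ 1); first by exists pi1.
by move=> z [p hp <-]; case/andP: (v_bnd T wf hp s).
Qed.

Lemma value_le s c : (forall pi1, is_strategy1 G pi1 -> val1_strat G T pi1 s <= c) ->
  value1 G T s <= c.
Proof.
move=> H; apply: sup_le_ub'; last by move=> z [p hp <-]; apply: H.
by exists (val1_strat G T (memoryless (unif_sel G)) s); exists (memoryless (unif_sel G)) => //; apply: mem_strat1; apply: unif1_sel.
Qed.

Lemma value_bnd s : 0 <= value1 G T s <= 1.
Proof.
have h1 := mem_strat1 (unif1_sel wf).
apply/andP; split.
  by apply: le_trans (val_le_value s h1); case/andP: (v_bnd T wf h1 s).
by apply: value_le => p hp; case/andP: (v_bnd T wf hp s).
Qed.

End Value.

Definition val01 (R : realType) (S : finType) (v : S -> R) := forall t, 0 <= v t <= 1.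

Section Pre.
Variables (R : realType) (S M : finType) (G : cgs R S M).
Hypothesis wf : cgs_wf G.

Lemma pp_bnd (xi1 xi2 : selector R S M) v s : is_selector1 G xi1 -> is_selector2 G xi2 ->
  val01 v -> 0 <= pre_pair G xi1 xi2 v s <= 1.
Proof.
move=> h1 h2 hv; rewrite pre_wt; have pw := wt_pd wf (h1 s) (h2 s).
apply/andP; split; [apply: pd_lb pw _|apply: pd_ub pw _] => t; by case/andP: (hv t).
Qed.

Lemma ps_le (xi1 xi2 : selector R S M) v s : is_selector1 G xi1 -> is_selector2 G xi2 ->
  val01 v -> pre1_sel G xi1 v s <= pre_pair G xi1 xi2 v s.
Proof.
move=> h1 h2 hv; apply: (@inf_le' _ _ _ 0); first by exists xi2.
by move=> z [x hx <-]; case/andP: (pp_bnd s h1 hx hv).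
Qed.

Lemma ps_ge (xi1 : selector R S M) v s c :
  (forall xi2, is_selector2 G xi2 -> c <= pre_pair G xi1 xi2 v s) -> c <= pre1_sel G xi1 v s.
Proof.
move=> H; apply: inf_ge'; last by move=> z [x hx <-]; apply: H.
by exists (pre_pair G xi1 (unif2 G) v s); exists (unif2 G) => //; apply: unif2_sel.
Qed.

Lemma ps_bnd (xi1 : selector R S M) v s : is_selector1 G xi1 -> val01 v ->
  0 <= pre1_sel G xi1 v s <= 1.
Proof.
move=> h1 hv; have h2 := unif2_sel wf; apply/andP; split.
  by apply: ps_ge => x hx; case/andP: (pp_bnd s h1 hx hv).
by apply: le_trans (ps_le s h1 h2 hv) _; case/andP: (pp_bnd s h1 h2 hv).
Qed.

Lemma ps_eq (xi1 xi1' : selector R S M) v s : xi1 s = xi1' s ->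
  pre1_sel G xi1 v s = pre1_sel G xi1' v s.
Proof. by move=> E; rewrite /pre1_sel /pre_pair E. Qed.

Lemma pre1_ge (xi1 : selector R S M) v s : is_selector1 G xi1 -> val01 v ->
  pre1_sel G xi1 v s <= pre1 G v s.
Proof.
move=> h1 hv; apply: (@le_sup' _ _ _ 1); first by exists xi1.
by move=> z [x hx <-]; case/andP: (ps_bnd s hx hv).
Qed.

Lemma pre1_le v s c : (forall xi1, is_selector1 G xi1 -> pre1_sel G xi1 v s <= c) ->
  pre1 G v s <= c.
Proof.
move=> H; apply: sup_le_ub'; last by move=> z [x hx <-]; apply: H.
by exists (pre1_sel G (unif_sel G) v s); exists (unif_sel G) => //; apply: unif1_sel.
Qed.

Lemma pre1_bnd v s : val01 v -> 0 <= pre1 G v s <= 1.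
Proof.
move=> hv; have h1 := unif1_sel wf; apply/andP; split.
  by apply: le_trans (pre1_ge s h1 hv); case/andP: (ps_bnd s h1 hv).
by apply: pre1_le => x hx; case/andP: (ps_bnd s hx hv).
Qed.

Lemma ps_lip (xi1 : selector R S M) v w e s : is_selector1 G xi1 -> val01 v -> val01 w ->
  (forall t, v t <= w t + e) -> pre1_sel G xi1 v s <= pre1_sel G xi1 w s + e.
Proof.
move=> h1 hv hw H; rewrite -lerBlDr; apply: ps_ge => xi2 h2; rewrite lerBlDr.
apply: le_trans (ps_le s h1 h2 hv) _; rewrite !pre_wt -pd_addc; last exact: wt_pd.
by apply: pd_mono; [exact: wt_pd|].
Qed.

Lemma pre1_lip v w e s : val01 v -> val01 w ->
  (forall t, v t <= w t + e) -> pre1 G v s <= pre1 G w s + e.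
Proof.
move=> hv hw H; apply: pre1_le => xi1 h1; apply: le_trans (ps_lip s h1 hv hw H) _.
by rewrite lerD2r; apply: pre1_ge.
Qed.

Lemma ps_mono (xi1 : selector R S M) v w s : is_selector1 G xi1 -> val01 v -> val01 w ->
  (forall t, v t <= w t) -> pre1_sel G xi1 v s <= pre1_sel G xi1 w s.
Proof.
move=> h1 hv hw H; rewrite -[leRHS]addr0; apply: ps_lip => // t; by rewrite addr0.
Qed.

End Pre.

Lemma head_rcons (S : Type) (x y : S) h : head x (rcons h y) = head y h.
Proof. by case: h. Qed.

Section Bellman.
Variables (R : realType) (S M : finType) (G : cgs R S M) (T : {set S}).
Hypothesis wf : cgs_wf G.

Lemma rw_agree pi1 (f : S -> strategy R S M) t n h s' : head s' h = t ->
  reach_within G T pi1 (fun h s => f (head s h) h s) n h s' =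
  reach_within G T pi1 (f t) n h s'.
Proof.
elim: n h s' => [|n IH] h s' ht //=.
case: (s' \in T) => //; rewrite ht; apply: eq_bigr => a _; apply: eq_bigr => b _.
by congr (_ * _); apply: eq_bigr => u _; rewrite IH // head_rcons.
Qed.

Variable gam : selector R S M.
Hypothesis hg : is_selector1 G gam.
Let v := val1_strat G T (memoryless gam).

Lemma v01 : val01 v.
Proof. by move=> t; apply: v_bnd => //; apply: mem_strat1. Qed.

Lemma bell_lower s : s \notin T -> pre1_sel G gam v s <= v s.
Proof.
move=> hs; have hm := mem_strat1 hg.
apply: v_ge => // pi2 h2.
have h2' : is_selector2 G (pi2 [::]) by apply: strat2_sel.
apply: le_trans (ps_le wf s hg h2' v01) _.
apply: le_eps => e e0.
have h2s : is_strategy2 G (sh s pi2) by move=> hh ss; apply: h2.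
have [N HN] := boolp.choice (fun t => rp_adh T wf hm h2s t e0).
pose K := (\max_t N t)%N.
apply: (@le_trans _ _ (reach_within G T (memoryless gam) pi2 K.+1 [::] s + e)); last by rewrite lerD2r; apply: rp_ge.
rewrite rw_step // pre_wt -pd_addc; last exact: wt_pd.
apply: pd_mono; first exact: wt_pd.
move=> t /=; rewrite rw_shift.
have -> : sh s (memoryless gam) = memoryless gam by [].
rewrite -lerBlDr.
have hK : (N t <= K)%N by apply: leq_bigmax.
apply: le_trans (rw_mono_le T wf hm h2s [::] t hK).
apply: le_trans (ltW (HN t)).
by rewrite lerD2r; apply: v_le.
Qed.

Lemma bell_upper s : s \notin T -> v s <= pre1_sel G gam v s.
Proof.
move=> hs; have hm := mem_strat1 hg.
apply: (ps_ge wf) => xi2 h2.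
apply: le_eps => e e0.
have H0 : forall t, exists p, is_strategy2 G p /\ reach_prob G T (memoryless gam) p t < v t + e.
  by move=> t; case: (v_adh T wf hm t e0) => p ? ?; exists p.
have [P HP] := boolp.choice H0.
pose pi2 : strategy R S M := fun h s' =>
  match h with [::] => xi2 s' | x :: h' => P (head s' h') h' s' end.
have hpi : is_strategy2 G pi2.
  move=> [|x h'] s'; first exact: h2.
  by case: (HP (head s' h')) => hp _; apply: hp.
apply: le_trans (v_le T wf hm s hpi) _.
apply: rp_ub => -[|n]; first by rewrite rw_0 //; apply: addr_ge0 (ltW e0); case/andP: (pp_bnd wf s hg h2 v01).
rewrite rw_step // pre_wt -pd_addc; last exact: wt_pd.
apply: pd_mono; first exact: wt_pd.
move=> t /=; rewrite rw_shift.
have -> : sh s (memoryless gam) = memoryless gam by [].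
have -> : sh s pi2 = (fun h s0 => P (head s0 h) h s0) by [].
rewrite (rw_agree _ _ _ (erefl (head t [::]))).
case: (HP t) => hPt hlt.
apply: le_trans (ltW hlt); exact: rp_ge.
Qed.
End Bellman.

Lemma ex_argmin (R : realType) (M : finType) (A : {set M}) (c : M -> R) :
  A != finset.set0 -> exists b, b \in A /\ forall b', b' \in A -> c b <= c b'.
Proof.
move=> /set0Pn [b0 hb0].
case: (@arg_minP _ R M b0 (mem A) c hb0) => b hb H; exists b; split => // b' hb'.
Qed.

Definition delta (R : realType) (M : finType) (b : M) : {ffun M -> R} := [ffun b' => (b' == b)%:R].

Lemma sum_delta (R : realType) (M : finType) (b : M) (c : M -> R) :
  \sum_i delta R b i * c i = c b.
Proof.
rewrite (bigD1 b) //= big1 ?addr0; first by rewrite ffunE eqxx mul1r.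
by move=> b' /negbTE hb; rewrite ffunE hb mul0r.
Qed.

Lemma delta_distr (R : realType) (M : finType) (A : {set M}) b : b \in A -> is_distr_on A (delta R b).
Proof.
move=> hb; split; [|split].
- by move=> a; rewrite ffunE ler0n.
- by move=> a ha; rewrite ffunE; case: eqP => // e; move: ha; rewrite e hb.
- rewrite (bigD1 b) //= big1 ?addr0 ?ffunE ?eqxx // => a /negbTE h; by rewrite ffunE h.
Qed.

Section Lin.
Variables (R : realType) (S M : finType) (G : cgs R S M).
Hypothesis wf : cgs_wf G.

Definition cb (x : {ffun M -> R}) s (u : S -> R) b := \sum_a x a * \sum_t trans G s a b t * u t.

Lemma wt_lin (x y : {ffun M -> R}) s (u : S -> R) :
  \sum_t wt G x y s t * u t = \sum_b y b * cb x s u b.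
Proof.
rewrite -step_wt exchange_big /=; apply: eq_bigr => b _; rewrite /cb mulr_sumr.
by apply: eq_bigr => a _; ring.
Qed.

Lemma lin_min (x y : {ffun M -> R}) s u b : is_distr_on (mov2 G s) y ->
  (forall b', b' \in mov2 G s -> cb x s u b <= cb x s u b') ->
  cb x s u b <= \sum_i y i * cb x s u i.
Proof.
move=> [y0 [yo y1]] H.
rewrite -[leLHS]mul1r -y1 mulr_suml; apply: ler_sum => b' _.
case: (boolP (b' \in mov2 G s)) => hb; last by rewrite yo // !mul0r.
by apply: ler_wpM2l => //; apply: H.
Qed.

Lemma ps_delta (xi1 : selector R S M) u s b : is_selector1 G xi1 -> val01 u ->
  b \in mov2 G s ->
  (forall b', b' \in mov2 G s -> cb (xi1 s) s u b <= cb (xi1 s) s u b') ->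
  cb (xi1 s) s u b <= pre1_sel G xi1 u s.
Proof.
move=> h1 hu hb H; apply: (ps_ge wf) => xi2 h2.
by rewrite pre_wt wt_lin; apply: lin_min.
Qed.

Lemma pre_delta (xi1 : selector R S M) u s b :
  pre_pair G xi1 (fun _ => delta R b) u s = cb (xi1 s) s u b.
Proof. by rewrite pre_wt wt_lin sum_delta. Qed.

End Lin.

Section Prefix.
Variables (R : realType) (S M : finType) (G : cgs R S M) (T : {set S}).
Hypothesis wf : cgs_wf G.

Lemma prefix_value (u : S -> R) : val01 u -> (forall s, s \in T -> u s = 1) ->
  (forall s xi1, s \notin T -> is_selector1 G xi1 -> pre1_sel G xi1 u s <= u s) ->
  forall s, value1 G T s <= u s.
Proof.
move=> hu uT H s; apply: (value_le wf) => pi1 h1.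
have B : forall hs : seq S * S, exists b, b \in mov2 G hs.2 /\
    forall b', b' \in mov2 G hs.2 -> cb G (pi1 hs.1 hs.2) hs.2 u b <= cb G (pi1 hs.1 hs.2) hs.2 u b'.
  by move=> [h s']; apply: ex_argmin; case: wf => _ [] /(_ s').
have [bs HB] := boolp.choice B.
pose pi2 : strategy R S M := fun h s' => delta R (bs (h, s')).
have h2 : is_strategy2 G pi2 by move=> h s'; apply: delta_distr; case: (HB (h, s')).
have claim : forall n h s', reach_within G T pi1 pi2 n h s' <= u s'.
  elim=> [|n IH] h s'.
    case: (boolP (s' \in T)) => hs; first by rewrite rw_T // uT.
    by rewrite rw_0 //; case/andP: (hu s').
  case: (boolP (s' \in T)) => hs; first by rewrite rw_T // uT.
  rewrite rw_step //.
  apply: le_trans (pd_mono (wt_pd wf (h1 h s') (h2 h s')) (fun t => IH (rcons h s') t)) _.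
  rewrite wt_lin /pi2 sum_delta.
  apply: le_trans (H s' (pi1 h) hs (strat1_sel h h1)).
  case: (HB (h, s')) => hb hmin.
  by apply: (ps_delta wf) => //; apply: strat1_sel.
apply: le_trans (v_le T wf h1 s h2) _.
by apply: rp_ub => n; apply: claim.

Qed.

End Prefix.

Section Trap.
Variables (R : realType) (S M : finType) (G : cgs R S M) (T : {set S}).
Hypothesis wf : cgs_wf G.

Definition trap (gam : selector R S M) (D : {set S}) :=
  D != finset.set0 /\ (forall s, s \in D -> s \notin T /\ ~ W2 G T s) /\
  (forall s, s \in D -> exists b, b \in mov2 G s /\ forall a, a \in mov1 G s -> 0 < gam s a ->
     forall t, 0 < trans G s a b t -> t \in D).

Lemma cb_zero (x : {ffun M -> R}) s u b : is_distr_on (mov1 G s) x -> b \in mov2 G s ->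
  (forall a, a \in mov1 G s -> x a != 0 -> forall t, 0 < trans G s a b t -> u t = 0) ->
  cb G x s u b = 0.
Proof.
move=> [x0 [xo _]] hb H; apply: big1 => a _.
case: (boolP (a \in mov1 G s)) => ha; last by rewrite xo // mul0r.
case: (eqVneq (x a) 0) => [->|hx]; first by rewrite mul0r.
rewrite big1 ?mulr0 // => t _.
have [tr0 _] := (proj2 (proj2 wf)) s a b ha hb.
case: (ltrgt0P (trans G s a b t)) => [htr||->]; last by rewrite mul0r.
- by rewrite (H a ha hx t htr) mulr0.
- by move=> h; move: (tr0 t); rewrite leNgt h.
Qed.

Lemma unif_pos s a : a \in mov1 G s -> 0 < unif_sel G s a.
Proof.
move=> ha; rewrite /unif_sel ffunE ha invr_gt0 ltr0n card_gt0.
by case: wf => /(_ s).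
Qed.

Lemma unif_notrap D : ~ trap (unif_sel G) D.
Proof.
move=> [hD [hC hB]].
have /set0Pn [s0 hs0] := hD.
pose u : S -> R := fun t => if t \in D then 0 else 1.
have hu : val01 u by move=> t; rewrite /u; case: (t \in D); rewrite ?lexx ?ler01.
have := @prefix_value _ _ _ G T wf u hu.
have uT : forall s, s \in T -> u s = 1.
  move=> s hs; rewrite /u; case: (boolP (s \in D)) => // hsD.
  by case: (hC s hsD); rewrite hs.
move=> /(_ uT) H.
have H' : forall s xi1, s \notin T -> is_selector1 G xi1 -> pre1_sel G xi1 u s <= u s.
  move=> s xi1 hs h1; rewrite /u; case: (boolP (s \in D)) => hsD; last first.
    by case/andP: (ps_bnd wf s h1 hu).
  have [b [hb Hb]] := hB s hsD.
  pose xi2 : selector R S M := fun s' => if s' == s then delta R b else unif2 G s'.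
  have h2 : is_selector2 G xi2.
    move=> s'; rewrite /xi2; case: eqP => [->|_]; first exact: delta_distr.
    exact: unif2_sel.
  apply: le_trans (ps_le wf s h1 h2 hu) _.
  rewrite pre_wt /xi2 eqxx wt_lin sum_delta (cb_zero (h1 s) hb) //.
  move=> a ha _ t ht; rewrite /u (Hb a ha (unif_pos ha) t ht) //.
have := H H' s0; have := value_bnd T wf s0; rewrite /u hs0.
case/andP=> h0 _ h1.
have : value1 G T s0 = 0 by apply/eqP; rewrite eq_le h1 h0.
by case: (hC s0 hs0) => _ hW hv; apply: hW.
Qed.

End Trap.

Section TrapStep.
Variables (R : realType) (S M : finType) (G : cgs R S M) (T : {set S}).
Hypothesis wf : cgs_wf G.

Lemma ps_le_cb (xi1 : selector R S M) u s b : is_selector1 G xi1 -> val01 u ->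
  b \in mov2 G s -> pre1_sel G xi1 u s <= cb G (xi1 s) s u b.
Proof.
move=> h1 hu hb.
pose xi2 : selector R S M := fun s' => if s' == s then delta R b else unif2 G s'.
have h2 : is_selector2 G xi2.
  move=> s'; rewrite /xi2; case: eqP => [->|_]; first exact: delta_distr.
  exact: unif2_sel.
apply: le_trans (ps_le wf s h1 h2 hu) _.
by rewrite pre_wt /xi2 eqxx wt_lin sum_delta.
Qed.

Lemma cb_const (x : {ffun M -> R}) s b m : is_distr_on (mov1 G s) x -> b \in mov2 G s ->
  cb G x s (fun _ => m) b = m.
Proof.
move=> [x0 [xo x1]] hb; rewrite /cb -[RHS]mul1r -x1 mulr_suml; apply: eq_bigr => a _.
case: (boolP (a \in mov1 G s)) => ha; last by rewrite xo // !mul0r.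
have [_ t1] := (proj2 (proj2 wf)) s a b ha hb.
by rewrite -mulr_suml t1 mul1r.
Qed.

Lemma cb_eq_max (x : {ffun M -> R}) s b u m : is_distr_on (mov1 G s) x -> b \in mov2 G s ->
  (forall a t, a \in mov1 G s -> 0 < x a -> 0 < trans G s a b t -> u t <= m) ->
  m <= cb G x s u b -> cb G x s u b = m /\
  forall a t, a \in mov1 G s -> 0 < x a -> 0 < trans G s a b t -> u t = m.
Proof.
move=> hx hb Hle Hge.
have [x0 [xo _]] := hx.
pose g a t := x a * (trans G s a b t * (m - u t)).
have g0 : forall a t, 0 <= g a t.
  move=> a t; rewrite /g.
  case: (boolP (a \in mov1 G s)) => ha; last by rewrite xo // mul0r.
  have [tr0 _] := (proj2 (proj2 wf)) s a b ha hb.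
  case: (ltrgt0P (x a)) => [xp||->]; last by rewrite mul0r.
  - case: (ltrgt0P (trans G s a b t)) => [tp||->]; last by rewrite mul0r mulr0.
    + by rewrite !mulr_ge0 ?subr_ge0 ?(Hle a t ha xp tp) // ltW.
    + by move=> h; move: (tr0 t); rewrite leNgt h.
  - by move=> h; move: (x0 a); rewrite leNgt h.
have sg : \sum_a \sum_t g a t = m - cb G x s u b.
  rewrite -{1}(cb_const m hx hb) /cb -sumrB; apply: eq_bigr => a _.
  rewrite -mulrBr /g -sumrB mulr_sumr; apply: eq_bigr => t _.
  by rewrite mulrBr.
have sg0 : \sum_a \sum_t g a t = 0.
  apply/eqP; rewrite eq_le; apply/andP; split; first by rewrite sg subr_le0.
  by apply: sumr_ge0 => a _; apply: sumr_ge0.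
split; first by apply/eqP; rewrite eq_sym -subr_eq0 -sg sg0.
move=> a t ha xp tp.
have ga : \sum_t g a t = 0.
  by apply: (psumr_eq0P _ sg0) => // i _; apply: sumr_ge0.
have gat : g a t = 0 by apply: (psumr_eq0P _ ga).
move: gat; rewrite /g => /eqP; rewrite !mulf_eq0 (gt_eqF xp) (gt_eqF tp) /= subr_eq0.
by move/eqP.
Qed.


Lemma notrap_step (gam gam' : selector R S M) (u : S -> R) :
  is_selector1 G gam -> is_selector1 G gam' -> val01 u ->
  (forall s, s \notin T -> ~ W2 G T s -> u s <= pre1_sel G gam' u s) ->
  (forall s, s \notin T -> ~ W2 G T s -> gam' s != gam s -> u s < pre1_sel G gam' u s) ->
  (forall D, ~ trap G T gam D) -> forall D, ~ trap G T gam' D.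
Proof.
move=> hg hg' hu Hle Hlt NT D [hD [hC hB]].
have [s1 [hs1 Hmax]] := ex_argmin (fun t => - u t) hD.
set m := u s1.
have Hm : forall t, t \in D -> u t <= m by move=> t ht; rewrite -lerN2; apply: Hmax.
apply: (NT [set t in D | u t == m]); split; [|split].
- by apply/set0Pn; exists s1; rewrite inE hs1 eqxx.
- by move=> s; rewrite inE => /andP [hs _]; apply: hC.
move=> s; rewrite inE => /andP [hs /eqP hum].
have [b [hb Hb]] := hB s hs.
have [hsT hsW] := hC s hs.
have hcb : m <= cb G (gam' s) s u b.
  rewrite -hum; apply: (le_trans (Hle s hsT hsW)); exact: ps_le_cb.
have [hcbm Heq] := cb_eq_max (hg' s) hb (fun a t ha hp ht => Hm t (Hb a ha hp t ht)) hcb.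
have eqg : gam' s = gam s.
  case: (eqVneq (gam' s) (gam s)) => // hne.
  have := Hlt s hsT hsW hne; rewrite hum => hlt.
  have h3 : pre1_sel G gam' u s <= cb G (gam' s) s u b by exact: ps_le_cb.
  by move: (lt_le_trans hlt h3); rewrite hcbm ltxx.
exists b; split => // a ha hp t ht.
have hp' : 0 < gam' s a by rewrite eqg.
by rewrite inE (Hb a ha hp' t ht) /= (Heq a t ha hp' ht) eqxx.
Qed.

End TrapStep.

Lemma le_sum1 (R : realType) (I : finType) (F : I -> R) j :
  (forall i, 0 <= F i) -> F j <= \sum_i F i.
Proof. by move=> H; rewrite (bigD1 j) //= lerDl sumr_ge0. Qed.

Lemma geom_small (R : realType) (z e : R) : 0 <= z < 1 -> 0 < e -> exists n, z ^+ n <= e.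
Proof.
move=> /andP [z0 z1] e0.
have hz : `|z| < 1 by rewrite ger0_norm.
have := cvg_expr hz; move/cvgrPdist_lt => /(_ e e0) [N _ HN].
exists N; have := HN N (leqnn N); rewrite /= sub0r normrN => h.
by apply: ltW; apply: le_lt_trans h; apply: ler_norm.
Qed.

Section Absorb.
Variables (R : realType) (S M : finType) (G : cgs R S M) (T : {set S}).
Hypothesis wf : cgs_wf G.

Definition absb s := (s \in T) || `[< W2 G T s >].

Fixpoint zw (pi1 pi2 : strategy R S M) n h s : R :=
  if absb s then 0 else
  match n with
  | 0 => 1
  | n'.+1 => \sum_a \sum_b (pi1 h s a * pi2 h s b *
               \sum_t trans G s a b t * zw pi1 pi2 n' (rcons h s) t)
  end.

Lemma zw_abs pi1 pi2 n h s : absb s -> zw pi1 pi2 n h s = 0.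
Proof. by case: n => /= [|n] ->. Qed.

Lemma zw_0 pi1 pi2 h s : ~~ absb s -> zw pi1 pi2 0 h s = 1.
Proof. by move=> /negbTE /= ->. Qed.

Lemma zw_step pi1 pi2 n h s : ~~ absb s ->
  zw pi1 pi2 n.+1 h s = \sum_t wt G (pi1 h s) (pi2 h s) s t * zw pi1 pi2 n (rcons h s) t.
Proof. by move=> /negbTE hs /=; rewrite hs step_wt. Qed.

Variables (pi1 pi2 : strategy R S M).
Hypotheses (h1 : is_strategy1 G pi1) (h2 : is_strategy2 G pi2).

Lemma zw_bnd n h s : 0 <= zw pi1 pi2 n h s <= 1.
Proof.
elim: n h s => [|n IH] h s.
  by case: (boolP (absb s)) => hs; [rewrite zw_abs // lexx ler01|rewrite zw_0 // lexx ler01].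
case: (boolP (absb s)) => hs; first by rewrite zw_abs // lexx ler01.
rewrite zw_step //; apply/andP; split.
  by apply: pd_lb (wt_pd wf (h1 h s) (h2 h s)) _ => t; case/andP: (IH (rcons h s) t).
by apply: pd_ub (wt_pd wf (h1 h s) (h2 h s)) _ => t; case/andP: (IH (rcons h s) t).
Qed.

Lemma zw_mono n h s : zw pi1 pi2 n.+1 h s <= zw pi1 pi2 n h s.
Proof.
elim: n h s => [|n IH] h s.
  case: (boolP (absb s)) => hs; first by rewrite !zw_abs.
  by rewrite zw_0 //; case/andP: (zw_bnd 1 h s).
case: (boolP (absb s)) => hs; first by rewrite !zw_abs.
rewrite (zw_step _ _ n.+1) // zw_step //.
by apply: pd_mono (wt_pd wf (h1 h s) (h2 h s)) _ => t; apply: IH.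
Qed.

Lemma zw_mono_le n m h s : (n <= m)%N -> zw pi1 pi2 m h s <= zw pi1 pi2 n h s.
Proof.
elim: m => [|m IH]; first by rewrite leqn0 => /eqP ->.
rewrite leq_eqVlt => /orP [/eqP -> //|]; rewrite ltnS => /IH h'.
exact: le_trans (zw_mono _ _ _) h'.
Qed.

Lemma zw_mul m c : (forall h s, zw pi1 pi2 m h s <= c) ->
  forall n h s, zw pi1 pi2 (n + m) h s <= zw pi1 pi2 n h s * c.
Proof.
move=> Hm; elim=> [|n IH] h s.
  case: (boolP (absb s)) => hs; first by rewrite !zw_abs // mul0r.
  by rewrite zw_0 // mul1r.
case: (boolP (absb s)) => hs; first by rewrite !zw_abs // mul0r.
rewrite addSn !zw_step // mulr_suml.
apply: ler_sum => t _; rewrite -mulrA; apply: ler_wpM2l; last exact: IH.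
by case: (wt_pd wf (h1 h s) (h2 h s)).
Qed.

End Absorb.

Section F1.
Variables (R : realType) (S M : finType) (G : cgs R S M) (T : {set S}).
Hypothesis wf : cgs_wf G.

Lemma absb_C s : s \notin T -> ~ W2 G T s -> ~~ absb G T s.
Proof. by move=> hs hw; rewrite /absb (negbTE hs) asboolF. Qed.

Lemma absb_W s : W2 G T s -> absb G T s.
Proof. by move=> hw; rewrite /absb asboolT ?orbT. Qed.

Variables (gam : selector R S M) (u : S -> R) (pi2 : strategy R S M).
Hypotheses (hg : is_selector1 G gam) (hu : val01 u) (h2 : is_strategy2 G pi2).
Hypothesis uW : forall s, s \notin T -> W2 G T s -> u s = 0.
Hypothesis uC : forall s, s \notin T -> ~ W2 G T s -> u s <= pre1_sel G gam u s.

Lemma u_le_rz n h s : u s <= reach_within G T (memoryless gam) pi2 n h s +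
                              zw G T (memoryless gam) pi2 n h s.
Proof.
have h1 := mem_strat1 hg.
elim: n h s => [|n IH] h s.
  case: (boolP (s \in T)) => hs.
    case/andP: (hu s) => _ hu1; case/andP: (zw_bnd T wf h1 h2 0 h s) => z0 _.
    by rewrite rw_T //; apply: le_trans hu1 _; rewrite lerDl.
  case: (pselect (W2 G T s)) => hw.
    by rewrite uW // addr_ge0 //; [case/andP: (rw_bnd T wf h1 h2 0 h s)|case/andP: (zw_bnd T wf h1 h2 0 h s)].
  rewrite zw_0 ?absb_C // rw_0 // add0r; by case/andP: (hu s).
case: (boolP (s \in T)) => hs.
  case/andP: (hu s) => _ hu1; case/andP: (zw_bnd T wf h1 h2 n.+1 h s) => z0 _.
  by rewrite rw_T //; apply: le_trans hu1 _; rewrite lerDl.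
case: (pselect (W2 G T s)) => hw.
  by rewrite uW // addr_ge0 //; [case/andP: (rw_bnd T wf h1 h2 n.+1 h s)|case/andP: (zw_bnd T wf h1 h2 n.+1 h s)].
rewrite zw_step ?absb_C // rw_step //.
apply: le_trans (uC hs hw) _.
have h2' : is_selector2 G (pi2 h) by apply: strat2_sel.
apply: le_trans (ps_le wf s hg h2' hu) _.
rewrite pre_wt -big_split /=.
apply: ler_sum => t _; rewrite -mulrDr; apply: ler_wpM2l; last exact: IH.
by case: (wt_pd wf (hg s) (h2 h s)) => ->.
Qed.

End F1.

Section Attr.
Variables (R : realType) (S M : finType) (G : cgs R S M) (T : {set S}).
Hypothesis wf : cgs_wf G.
Variable gam : selector R S M.
Hypothesis hg : is_selector1 G gam.

Lemma pmin : exists p0 : R, 0 < p0 /\ p0 <= 1 /\ forall s a b t, 0 < gam s a ->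
  0 < trans G s a b t -> p0 <= gam s a * trans G s a b t.
Proof.
pose f (x : S * M * M * S) := gam x.1.1.1 x.1.1.2 * trans G x.1.1.1 x.1.1.2 x.1.2 x.2.
exists (\big[Order.min/1]_(x | 0 < f x) f x); split; [|split].
- apply: (big_ind (fun x => 0 < x)) => //; first by move=> x y hx hy; rewrite lt_min hx hy.
- exact: bigmin_le_id.
- move=> s a b t ha ht; apply: (@bigmin_le_cond _ _ _ _ (s, a, b, t) (fun x => 0 < f x) f).
  by rewrite /f /= mulr_gt0.
Qed.

Definition attrF (X : {set S}) : {set S} := [set s | absb G T s || [forall b, (b \in mov2 G s) ==>
  [exists a, [exists t, [&& a \in mov1 G s, 0 < gam s a, t \in X & 0 < trans G s a b t]]]]].

Lemma attrF_mono : {homo attrF : X Y / X \subset Y}.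
Proof.
move=> X Y /fintype.subsetP XY; apply/fintype.subsetP => s; rewrite !inE => /orP [->//|/forallP H].
apply/orP; right; apply/forallP => b; apply/implyP => hb.
have /existsP [a /existsP [t /and4P [h1 h2 ht h4]]] := implyP (H b) hb.
by apply/existsP; exists a; apply/existsP; exists t; rewrite h1 h2 h4 (XY t ht).
Qed.

Hypothesis NT : forall D, ~ trap G T gam D.

Lemma fix_all s : s \in fixset attrF.
Proof.
case: (boolP (s \in fixset attrF)) => // hs; exfalso.
apply: (NT (D := ~: fixset attrF)); split; [|split].
- by apply/set0Pn; exists s; rewrite inE.
- move=> s'; rewrite inE -{1}(fixsetK attrF_mono) inE negb_or => /andP [hab _].
  move: hab; rewrite /absb negb_or => /andP [-> hw]; split => // w.
  by move: hw; rewrite asboolT.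
- move=> s'; rewrite inE -{1}(fixsetK attrF_mono) inE negb_or => /andP [_].
  move/forallPn => [b]; rewrite negb_imply => /andP [hb /existsPn H].
  exists b; split => // a ha hp t ht; rewrite inE.
  apply/negP => htL0; move: (H a) => /existsPn /(_ t).
  by rewrite ha hp htL0 ht.
Qed.


Lemma attr_bound : exists q : R, 0 <= q < 1 /\ forall pi2, is_strategy2 G pi2 ->
  forall h s, zw G T (memoryless gam) pi2 #|S| h s <= q.
Proof.
have [p0 [p0pos [p01 Hp]]] := pmin.
have hp0 : 0 <= p0 by apply: ltW.
exists (1 - p0 ^+ #|S|); split.
  by rewrite subr_ge0 exprn_ile1 //= ltrBlDr ltrDl exprn_gt0.
move=> pi2 h2.
have h1 := mem_strat1 hg.
have claim : forall k h s, s \in iter k attrF finset.set0 ->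
    zw G T (memoryless gam) pi2 k h s <= 1 - p0 ^+ k.
  elim=> [|k IH] h s; first by rewrite inE.
  case: (boolP (absb G T s)) => hab.
    by move=> _; rewrite zw_abs // subr_ge0 exprn_ile1.
  rewrite iterS inE (negbTE hab) orFb => /forallP H.
  rewrite zw_step //.
  set L := iter k attrF finset.set0.
  pose ind t : R := (t \in L)%:R.
  have hw := wt_pd wf (hg s) (h2 h s).
  apply: (@le_trans _ _ (\sum_t wt G (gam s) (pi2 h s) s t * (1 - p0 ^+ k * ind t))).
    apply: pd_mono hw _ => t; rewrite /ind; case: (boolP (t \in L)) => ht.
      by rewrite mulr1; apply: IH.
    by rewrite mulr0 subr0; case/andP: (zw_bnd T wf h1 h2 k (rcons h s) t).
  have eq1 : \sum_t wt G (gam s) (pi2 h s) s t * (1 - p0 ^+ k * ind t) =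
      1 - p0 ^+ k * \sum_t wt G (gam s) (pi2 h s) s t * ind t.
    under eq_bigr do rewrite mulrBr mulr1.
    rewrite sumrB hw.2 mulr_sumr; congr (_ - _); apply: eq_bigr => t _; ring.
  rewrite eq1 exprSr lerD2l lerN2; apply: ler_wpM2l; first exact: exprn_ge0.
  rewrite wt_lin.
  have [y0 [yo y1]] := h2 h s.
  apply: (@le_trans _ _ (\sum_b pi2 h s b * p0)); first by rewrite -mulr_suml y1 mul1r.
  apply: ler_sum => b _.
  case: (boolP (b \in mov2 G s)) => hb; last by rewrite yo // !mul0r.
  apply: ler_wpM2l => //.
  have /existsP [a /existsP [t /and4P [ha hpa ht htr]]] := implyP (H b) hb.
  have [tr0 _] := (proj2 (proj2 wf)) s a b ha hb.
  apply: le_trans (Hp s a b t hpa htr) _.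
  have hg0 := (hg s).1.
  apply: (@le_trans _ _ (gam s a * \sum_t0 trans G s a b t0 * ind t0)).
    apply: ler_wpM2l; first exact: hg0.
    have -> : trans G s a b t = trans G s a b t * ind t by rewrite /ind ht mulr1.
    rewrite (bigD1 t) //= lerDl sumr_ge0 // => i _; by rewrite mulr_ge0 // /ind ler0n.
  rewrite /cb (bigD1 a) //= lerDl; apply: sumr_ge0 => a0 _.
  case: (boolP (a0 \in mov1 G s)) => ha0; last by rewrite (hg s).2.1 // mul0r.
  have [tr0' _] := (proj2 (proj2 wf)) s a0 b ha0 hb.
  by rewrite mulr_ge0 // sumr_ge0 // => i _; rewrite mulr_ge0 // /ind ler0n.
move=> h s; exact: (claim #|S| h s (fix_all s)).
Qed.

End Attr.

Section Improve.
Variables (R : realType) (S M : finType) (G : cgs R S M) (T : {set S}).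
Hypothesis wf : cgs_wf G.
Variables (gam : selector R S M) (u : S -> R).
Hypotheses (hg : is_selector1 G gam) (NT : forall D, ~ trap G T gam D) (hu : val01 u).
Hypothesis uW : forall s, s \notin T -> W2 G T s -> u s = 0.
Hypothesis uC : forall s, s \notin T -> ~ W2 G T s -> u s <= pre1_sel G gam u s.

Lemma improve_le s : u s <= val1_strat G T (memoryless gam) s.
Proof.
have h1 := mem_strat1 hg.
have [q [hq Hq]] := attr_bound wf hg NT.
apply: (v_ge wf) => pi2 h2.
have [q0 q1] := andP hq.
have geo : forall j h s', zw G T (memoryless gam) pi2 (j * #|S|) h s' <= q ^+ j.
  elim=> [|j IH] h s'; first by rewrite mul0n expr0; case/andP: (zw_bnd T wf h1 h2 0 h s').
  rewrite mulSn addnC exprSr.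
  apply: le_trans (zw_mul wf h1 h2 (Hq pi2 h2) (j * #|S|) h s') _.
  by apply: ler_wpM2r.
apply: le_eps => e e0.
have [j hj] := geom_small hq e0.
apply: le_trans (u_le_rz wf hg hu h2 uW uC (j * #|S|) [::] s) _.
apply: lerD; first exact: rp_ge.
exact: le_trans (geo j [::] s) hj.
Qed.

End Improve.

Section Main.
Variables (R : realType) (S M : finType) (G : cgs R S M) (T : {set S}).
Variable gamma : nat -> selector R S M.
Hypothesis wf : cgs_wf G.
Hypothesis Habs : forall s, s \in T \/ W2 G T s -> absorbing G s.
Hypothesis g0 : gamma 0%N = unif_sel G.
Hypothesis Hstep : forall i, alg_step G T (gamma i) (gamma i.+1).

Let v i := val1_strat G T (memoryless (gamma i)).

Lemma absorb_pre (xi1 : selector R S M) u s : is_selector1 G xi1 -> val01 u ->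
  W2 G T s -> pre1_sel G xi1 u s <= u s.
Proof.
move=> h1 hu hw; have h2 := unif2_sel wf.
apply: le_trans (ps_le wf s h1 h2 hu) _.
by rewrite pre_wt (wt_absorb wf _ (h1 s) (h2 s) (Habs (or_intror hw))).
Qed.

Lemma val_T pi1 s : is_strategy1 G pi1 -> s \in T -> val1_strat G T pi1 s = 1.
Proof.
move=> h1 hs; apply/eqP; rewrite eq_le; apply/andP; split; first by case/andP: (v_bnd T wf h1 s).
apply: (v_ge wf) => pi2 h2; apply: le_trans (rp_ge T wf h1 h2 0 s).
by rewrite rw_T.
Qed.

Lemma val_W pi1 s : is_strategy1 G pi1 -> W2 G T s -> val1_strat G T pi1 s = 0.
Proof.
move=> h1 hw; apply/eqP; rewrite eq_le; apply/andP; split; last by case/andP: (v_bnd T wf h1 s).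
by rewrite -hw; apply: val_le_value.
Qed.

Lemma inv_step i : is_selector1 G (gamma i) -> (forall D, ~ trap G T (gamma i) D) ->
  [/\ is_selector1 G (gamma i.+1),
      forall s, improve_set G T (v i) s -> pre1_sel G (gamma i.+1) (v i) s = pre1 G (v i) s,
      forall s, ~ improve_set G T (v i) s -> gamma i.+1 s = gamma i s &
      forall s, s \notin T -> ~ W2 G T s -> v i s <= pre1_sel G (gamma i.+1) (v i) s].
Proof.
move=> hg NT.
have [xi1 [hx [Hx1 [Hx2 Hx3]]]] := Hstep i.
have hg' : is_selector1 G (gamma i.+1).
  move=> s; case: (pselect (improve_set G T (v i) s)) => hi.
    by rewrite (Hx2 s hi); apply: hx.
  by rewrite (Hx3 s hi); apply: hg.
have S2 : forall s, improve_set G T (v i) s -> pre1_sel G (gamma i.+1) (v i) s = pre1 G (v i) s.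
  by move=> s hi; rewrite (ps_eq _ _ (Hx2 s hi)); apply: Hx1.
split => // s hs hw.
case: (pselect (improve_set G T (v i) s)) => hi.
  by rewrite S2 //; case: hi => _ [_ /ltW].
by rewrite (ps_eq _ _ (Hx3 s hi)); apply: bell_upper.
Qed.

Lemma inv_all i : is_selector1 G (gamma i) /\ forall D, ~ trap G T (gamma i) D.
Proof.
elim: i => [|i [hg NT]].
  by rewrite g0; split; [apply: unif1_sel|apply: unif_notrap].
have [hg' S2 S3 S1] := inv_step hg NT.
split => //; apply: (notrap_step wf hg hg' (v01 T wf hg) S1) => // s hs hw hne.
case: (pselect (improve_set G T (v i) s)) => hi.
  by rewrite S2 //; case: hi => _ [].
by move: hne; rewrite S3 // eqxx.
Qed.

Lemma v_mono i s : v i s <= v i.+1 s.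
Proof.
have [hg NT] := inv_all i; have [hg' NT'] := inv_all i.+1.
have [_ S2 S3 S1] := inv_step hg NT.
apply: (improve_le wf hg' NT' (v01 T wf hg)) => // s' hs hw.
by rewrite /v val_W //; apply: mem_strat1.
Qed.

Lemma v_mono_le n m s : (n <= m)%N -> v n s <= v m s.
Proof.
elim: m => [|m IH]; first by rewrite leqn0 => /eqP ->.
rewrite leq_eqVlt => /orP [/eqP -> //|]; rewrite ltnS => /IH h'.
exact: le_trans h' (v_mono _ _).
Qed.

Lemma pre_next i s : s \notin T -> ~ W2 G T s -> pre1 G (v i) s <= v i.+1 s.
Proof.
move=> hs hw.
have [hg NT] := inv_all i; have [hg' NT'] := inv_all i.+1.
have [_ S2 S3 S1] := inv_step hg NT.
case: (pselect (improve_set G T (v i) s)) => hi.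
  rewrite -S2 //; have hb := bell_lower wf hg' hs; apply: le_trans hb.
  apply: ps_mono => //; [exact: v01|exact: v01|move=> t; exact: v_mono].
apply: le_trans (v_mono i s).
by rewrite leNgt; apply/negP => hlt; apply: hi.
Qed.


Lemma part1 i : strat_le G T (memoryless (gamma i)) (memoryless (gamma i.+1)) /\
  (memoryless (gamma i) = memoryless (gamma i.+1) -> forall s, v i s = value1 G T s).
Proof.
have [hg NT] := inv_all i; have [hg' NT'] := inv_all i.+1.
have [_ S2 S3 S1] := inv_step hg NT.
have hv := v01 T wf hg.
have Hopt : gamma i = gamma i.+1 -> forall s, v i s = value1 G T s.
  move=> E s; apply/eqP; rewrite eq_le (val_le_value T wf s (mem_strat1 hg)) /=.
  apply: (prefix_value wf) => //.
  - by move=> t ht; apply: val_T => //; apply: mem_strat1.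
  - move=> t xi1 ht h1; case: (pselect (W2 G T t)) => hw; first exact: absorb_pre.
    apply: le_trans (pre1_ge wf t h1 hv) _.
    rewrite leNgt; apply/negP => hlt.
    have hi : improve_set G T (v i) t by [].
    have := S2 t hi; rewrite -E => e.
    by have := bell_lower wf hg ht; rewrite e -/(v i) leNgt hlt.
split; last by move=> E; apply: Hopt; exact: (congr1 (fun f => f [::]) E).
case: (pselect (memoryless (gamma i) = memoryless (gamma i.+1))) => E; first by right.
left; split; first by move=> s; apply: v_mono.
case: (pselect (exists s, improve_set G T (v i) s)) => [[s hi]|hn].
  exists s; have [hs [hw hlt]] := hi.
  by apply: lt_le_trans hlt _; apply: pre_next.
exfalso; apply: E.
have E' : gamma i.+1 = gamma i.
  by apply: boolp.funext => s; apply: S3 => hi; apply: hn; exists s.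
by rewrite /memoryless E'.
Qed.

Lemma lim_val s : sup (range (fun i => v i s)) = value1 G T s.
Proof.
pose l t := sup (range (fun i => v i t)).
have vb : forall i t, 0 <= v i t <= 1.
  by move=> i t; have [hg _] := inv_all i; apply: v_bnd => //; apply: mem_strat1.
have vl : forall i t, v i t <= l t.
  move=> i t; apply: (@le_sup' _ _ _ 1); first by exists i.
  by move=> z [j _ <-]; case/andP: (vb j t).
have l1 : forall t, l t <= 1.
  by move=> t; apply: sup_le_ub'; [exists (v 0%N t); exists 0%N|move=> z [j _ <-]; case/andP: (vb j t)].
have vval : forall i t, v i t <= value1 G T t.
  by move=> i t; have [hg _] := inv_all i; apply: (val_le_value T wf); apply: mem_strat1.
have lval : forall t, l t <= value1 G T t.
  by move=> t; apply: sup_le_ub'; [exists (v 0%N t); exists 0%N|move=> z [j _ <-]; apply: vval].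
have hl : val01 l.
  by move=> t; rewrite l1 andbT; apply: le_trans (vl 0%N t); case/andP: (vb 0%N t).
have adh : forall e, 0 < e -> exists K, forall t, l t - e <= v K t.
  move=> e e0.
  have H0 : forall t, exists i, l t - e < v i t.
    move=> t; have [||z [j _ <-] hz] := @sup_adh' _ (range (fun i => v i t)) 1 e e0.
    - by exists (v 0%N t); exists 0%N.
    - by move=> z [j _ <-]; case/andP: (vb j t).
    by exists j.
  have [I HI] := boolp.choice H0.
  exists (\max_t I t)%N => t; apply: le_trans (ltW (HI t)) _.
  by apply: v_mono_le; apply: leq_bigmax.
apply/eqP; rewrite eq_le lval /=.
apply: (@prefix_value _ _ _ G T wf l) => //.
- move=> t ht; apply/eqP; rewrite eq_le l1 /=; apply: le_trans (vl 0%N t).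
  have [hg _] := inv_all 0%N; by rewrite /v val_T //; apply: mem_strat1.
- move=> t xi1 ht h1; case: (pselect (W2 G T t)) => hw; first exact: absorb_pre.
  apply: le_trans (pre1_ge wf t h1 hl) _.
  apply: le_eps => e e0; have [K HK] := adh e e0.
  have [hg _] := inv_all K.
  have Hl' : forall t', l t' <= v K t' + e by move=> t'; rewrite -lerBlDr; apply: HK.
  apply: le_trans (pre1_lip wf t hl (v01 T wf hg) Hl') _.
  by rewrite lerD2r; apply: le_trans (pre_next K ht hw) (vl _ _).
Qed.

Lemma part2 s : val1_strat G T (memoryless (gamma i)) s @[i --> \oo] --> value1 G T s.
Proof.
rewrite -lim_val.
apply: (@nondecreasing_cvgn _ (fun i => v i s)).
  by move=> n m hnm; apply: v_mono_le.
exists 1 => z [j _ <-]; have [hg _] := inv_all j.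
by case/andP: (v_bnd T wf (mem_strat1 hg) s).
Qed.

End Main.

Unset Implicit Arguments.

Theorem theorem3 (R : realType) (S M : finType) (G : cgs R S M) (T : {set S})
    (gamma : nat -> selector R S M) :
  cgs_wf G ->
  (forall s, s \in T \/ W2 G T s -> absorbing G s) ->
  gamma 0%N = unif_sel G ->
  (forall i, alg_step G T (gamma i) (gamma i.+1)) ->
  (forall i,
     strat_le G T (memoryless (gamma i)) (memoryless (gamma i.+1)) /\
     (memoryless (gamma i) = memoryless (gamma i.+1) ->
        forall s, val1_strat G T (memoryless (gamma i)) s = value1 G T s)) /\
  (forall s, val1_strat G T (memoryless (gamma i)) s @[i --> \oo]
               --> value1 G T s).
Proof.
move=> wf Habs g0 Hstep; split.
  by move=> i; apply: (part1 wf Habs g0 Hstep).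
by move=> s; apply: (part2 wf Habs g0 Hstep).
Qed.
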